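(* Let $A\subseteq\mathbb N$ be such that both $A$ and $\mathbb N\setminus A$ are infinite. Then there is no $\{\cup,\cap,\overline{\phantom{c}},+,/\}$-circuit $C$ with $I(C)=A$. (In particular, no such circuit describes the set of prime numbers.)
   Context: Natural numbers include $0$. For $A,B\subseteq\mathbb N$: $A\cup B$, $A\cap B$ are the usual operations, $\overline{A}=\mathbb N\setminus A$, $A+B=\{a+b: a\in A, b\in B\}$, $A\times B=\{a\cdot b: a\in A, b\in B\}$, and $A/B=\{c\in\mathbb N:\exists a\in A\ \exists b\in B\setminus\{0\}: a=c\cdot b\}$ (exact integer division without remainder or rounding). For $\emptyset\ne\mathcal O\subseteq\{\cup,\cap,\overline{\phantom{c}},+,\times,/\}$, an $\mathcal O$-circuit $C=(V,E,g_C,\alpha)$ is a finite acyclic directed multigraph with gate set $V\subseteq\mathbb N$, every gate having indegree $0$, $1$ or $2$, a designated output gate $g_C\in V$, and a labeling $\alpha$: gates of indegree $0$ (input gates) are labeled by natural numbers, gates of indegree $1$ are labeled $\overline{\phantom{c}}$ (allowed only if $\overline{\phantom{c}}\in\mathcal O$), and gates of indegree $2$ are labeled by an operation in $\mathcal O\setminus\{\overline{\phantom{c}}\}$. The result set $I(g)\subseteq\mathbb N$ is defined inductively: $I(g)=\{\alpha(g)\}$ for an input gate; $I(g)=\mathbb N\setminus I(p)$ for a complement gate with predecessor $p$; $I(g)=I(g_1)\,\sigma\,I(g_2)$ for a gate labeled $\sigma$ with predecessors $g_1\le g_2$ (a double edge from one gate gives $g_1=g_2$). $I(C)=I(g_C)$.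 *)

(* Defs.v *)
From mathcomp Require Import all_boot.
Set Implicit Arguments. Unset Strict Implicit. Unset Printing Implicit Defensive.

Definition natset := nat -> Prop.

Definition set_cup (A B : natset) : natset := fun c => A c \/ B c.
Definition set_cap (A B : natset) : natset := fun c => A c /\ B c.
Definition set_compl (A : natset) : natset := fun c => ~ A c.
Definition set_plus (A B : natset) : natset :=
  fun c => exists a b, A a /\ B b /\ c = a + b.
Definition set_times (A B : natset) : natset :=
  fun c => exists a b, A a /\ B b /\ c = a * b.
Definition set_div (A B : natset) : natset :=
  fun c => exists a b, A a /\ B b /\ b <> 0 /\ a = c * b.

Definition infinite_set (A : natset) : Prop := forall m, exists n, m <= n /\ A n.

Inductive op := OCup | OCap | OCompl | OPlus | OTimes | ODiv.

Inductive label := LInput of nat | LCompl | LBin of op.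

Definition apply_bin (o : op) (A B : natset) : natset :=
  match o with
  | OCup => set_cup A B
  | OCap => set_cap A B
  | OPlus => set_plus A B
  | OTimes => set_times A B
  | ODiv => set_div A B
  | OCompl => A (* never used: binary gates are not labeled OCompl *)
  end.

(** A circuit (V, E, g_C, alpha): [gates] lists the gate set V (a finite subset
    of N), [preds g] lists the predecessors of g with multiplicity (the
    multiset of edges into g, a double edge giving a repeated entry), sorted
    increasingly so that for a binary gate preds g = [g1; g2] with g1 <= g2;
    [lab] is the labeling alpha and [out] the output gate g_C. *)
Record circuit := Circuit {
  gates : seq nat;
  preds : nat -> seq nat;
  lab   : nat -> label;
  out   : nat
}.

Definition edge (C : circuit) (p g : nat) : Prop := g \in gates C /\ p \in preds C g.

Inductive path1 (C : circuit) : nat -> nat -> Prop :=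
  | path1_edge x y : edge C x y -> path1 C x y
  | path1_step x y z : edge C x y -> path1 C y z -> path1 C x z.

Definition acyclic (C : circuit) : Prop := forall g, ~ path1 C g g.

(** Well-formed O-circuit, for O given as a predicate on operations
    (the paper requires O nonempty). *)
Definition is_circuit (O : op -> Prop) (C : circuit) : Prop :=
  [/\ out C \in gates C,
      (forall g p, g \in gates C -> p \in preds C g -> p \in gates C),
      (forall g, g \in gates C -> sorted leq (preds C g)),
      acyclic C &
      (forall g, g \in gates C ->
         match lab C g with
         | LInput _ => size (preds C g) = 0
         | LCompl => size (preds C g) = 1 /\ O OCompl
         | LBin o => size (preds C g) = 2 /\ o <> OCompl /\ O o
         end)].

(** [I] is the (inductively defined) result-set assignment of C: it satisfies
    the defining equations at every gate. By acyclicity, such an assignment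
    exists and is unique on V. *)
Definition result_sets (C : circuit) (I : nat -> natset) : Prop :=
  forall g, g \in gates C ->
    match lab C g, preds C g with
    | LInput n, [::] => forall c, I g c <-> c = n
    | LCompl, [:: p] => forall c, I g c <-> set_compl (I p) c
    | LBin o, [:: g1; g2] => forall c, I g c <-> apply_bin o (I g1) (I g2) c
    | _, _ => False
    end.

Definition computes (C : circuit) (A : natset) : Prop :=
  exists I, result_sets C I /\ forall c, I (out C) c <-> A c.

Definition O_noTimes (o : op) : Prop :=
  o = OCup \/ o = OCap \/ o = OCompl \/ o = OPlus \/ o = ODiv.

(* Main.v *)
Require Import Defs.
From mathcomp Require Import all_boot.
From mathcomp Require Import zify.
From Stdlib Require Import Classical.

Definition FC (X : natset) :=
  (exists m, forall c, X c -> c < m) \/ (exists m, forall c, m <= c -> X c).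

Lemma FC_ext (X Y : natset) : (forall c, X c <-> Y c) -> FC Y -> FC X.
Proof.
move=> H [[m Hm]|[m Hm]]; [left|right]; exists m => c.
  by move/H/Hm.
by move/Hm/H.
Qed.

Lemma FC_compl X : FC X -> FC (set_compl X).
Proof.
case=> [[m Hm]|[m Hm]].
  right; exists m => c Hc HX; have := Hm c HX; lia.
left; exists m => c Hc; rewrite ltnNge; apply/negP => /Hm; exact Hc.
Qed.

Lemma FC_cup X Y : FC X -> FC Y -> FC (set_cup X Y).
Proof.
case=> [[a Ha]|[a Ha]] [[b Hb]|[b Hb]].
- left; exists (a+b) => c [/Ha|/Hb]; lia.
- right; exists b => c /Hb ?; by right.
- right; exists a => c /Ha ?; by left.
- right; exists a => c /Ha ?; by left.
Qed.

Lemma FC_cap X Y : FC X -> FC Y -> FC (set_cap X Y).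
Proof.
case=> [[a Ha]|[a Ha]] [[b Hb]|[b Hb]].
- left; exists a => c [/Ha ? _] //.
- left; exists a => c [/Ha ? _] //.
- left; exists b => c [_ /Hb ?] //.
- right; exists (a+b) => c Hc; split; [apply Ha | apply Hb]; lia.
Qed.

Lemma FC_plus X Y : FC X -> FC Y -> FC (set_plus X Y).
Proof.
case=> [[a Ha]|[a Ha]].
  case=> [[b Hb]|[b Hb]].
    left; exists (a+b) => c [x [y [Hx [Hy ->]]]].
    have := Ha x Hx; have := Hb y Hy; lia.
  destruct (classic (exists x, X x)) as [[x Hx]|Hn].
    right; exists (b+x) => c Hc; exists x, (c-x); split => //; split; [apply Hb; lia| lia].
  left; exists 0 => c [x [y [Hx _]]]; exfalso; apply Hn; by exists x.
move=> _.
destruct (classic (exists y, Y y)) as [[y Hy]|Hn].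
  right; exists (a+y) => c Hc; exists (c-y), y; split; [apply Ha; lia| split => //; lia].
left; exists 0 => c [x [y [_ [Hy _]]]]; exfalso; apply Hn; by exists y.
Qed.

Lemma FC_div X Y : FC X -> FC Y -> FC (set_div X Y).
Proof.
move=> HX _; case: HX => [[a Ha]|[a Ha]].
  left; exists a => c [x [y [Hx [Hy [Hy0 E]]]]].
  have := Ha x Hx; rewrite E; nia.
destruct (classic (exists y, Y y /\ y <> 0)) as [[y [Hy Hy0]]|Hn].
  right; exists a => c Hc; exists (c*y), y; split; [apply Ha; nia| split => //].
left; exists 0 => c [x [y [_ [Hy [Hy0 _]]]]]; exfalso; apply Hn; by exists y.
Qed.

Lemma step C I g : is_circuit O_noTimes C -> result_sets C I -> g \in gates C ->
  (forall p, p \in preds C g -> FC (I p)) -> FC (I g).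
Proof.
case=> _ _ _ _ Hlab HI Hg.
have H := HI g Hg; have Hs := Hlab g Hg.
move: H Hs.
case: (lab C g) => [n|| o]; case: (preds C g) => [|p [|q [|r l]]] //= H Hs Hp;
  try by case: Hs.
- apply: (@FC_ext _ (fun c => c = n) H); left; exists n.+1 => c ->; lia.
- apply: (@FC_ext _ (set_compl (I p)) H); apply: FC_compl; apply: Hp; by rewrite mem_seq1.
- have Hp1 : FC (I p) by apply: Hp; rewrite !inE eqxx.
  have Hq1 : FC (I q) by apply: Hp; rewrite !inE eqxx orbT.
  apply: (@FC_ext _ (apply_bin o (I p) (I q)) H).
  case: Hs => _ [Ho [->|[->|[->|[->|->]]]]] /=.
  + exact: FC_cup.
  + exact: FC_cap.
  + by [].
  + exact: FC_plus.
  + exact: FC_div.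
Qed.

Definition er (C : circuit) : rel nat := fun x y => (x \in gates C) && (y \in preds C x).

Lemma path1_snoc C x y z : path1 C x y -> edge C y z -> path1 C x z.
Proof.
induction 1 => He.
  eapply path1_step; [eassumption| by constructor].
eapply path1_step; eauto.
Qed.

Lemma path_in C x s y : path (er C) x s -> y \in s -> path1 C y x.
Proof.
elim: s x => [|z s IH] x //= /andP[/andP[Hx Hz] Hp]; rewrite inE => /orP[/eqP->|Hy].
  by apply: path1_edge; split.
by apply: path1_snoc (IH _ Hp Hy) _; split.
Qed.

Lemma nonuniq_cycle C x s : path (er C) x s -> ~~ uniq (x :: s) -> exists g, path1 C g g.
Proof.
elim: s x => [|z s IH] x; first by [].
move=> Hfull; move: (Hfull) => /= /andP[_ Hp].
rewrite [uniq _]/= negb_and negbK => /orP[Hx|Hu].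
  exists x; exact: path_in Hfull Hx.
exact: IH Hp Hu.
Qed.

Lemma chain C (bad : nat -> Prop) g0 : is_circuit O_noTimes C -> g0 \in gates C -> bad g0 ->
  (forall g, g \in gates C -> bad g -> exists p, p \in preds C g /\ bad p) ->
  forall k, exists s, [/\ size s = k, path (er C) g0 s, last g0 s \in gates C,
     bad (last g0 s) & all (fun x => x \in gates C) s].
Proof.
case=> _ Hclos _ _ _ Hg0 Hb0 Hst.
elim => [|k [s [Hs Hp Hl Hb Ha]]]; first by exists [::].
have [p [Hpp Hbp]] := Hst _ Hl Hb.
have Hpg : p \in gates C by exact: Hclos Hl Hpp.
exists (rcons s p); split.
- by rewrite size_rcons Hs.
- by rewrite rcons_path Hp /er Hl Hpp.
- by rewrite last_rcons.
- by rewrite last_rcons.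
- by rewrite all_rcons Hpg Ha.
Qed.

Theorem corollary3 (A : natset) :
  infinite_set A -> infinite_set (set_compl A) ->
  ~ exists C : circuit, is_circuit O_noTimes C /\ computes C A.
Proof.
move=> HA HcA [C [HC [I [HI Hout]]]].
have Hbad : ~ FC (I (out C)).
  case=> [[m Hm]|[m Hm]].
    have [n [Hn HAn]] := HA m; have := Hm n (proj2 (Hout n) HAn); lia.
  have [n [Hn HAn]] := HcA m; apply: HAn; apply/Hout; exact: Hm.
have Hst : forall g, g \in gates C -> ~ FC (I g) -> exists p, p \in preds C g /\ ~ FC (I p).
  move=> g Hg Hb; apply: NNPP => Hn; apply: Hb; eapply (@step C I g HC HI Hg) => p Hp.
  apply: NNPP => Hnp; apply: Hn; by exists p.
have HC' := HC.
case: HC => Hout_in Hclos _ Hacyc _.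
have [s [Hs Hp _ _ Ha]] := @chain C (fun g => ~ FC (I g)) (out C) HC' Hout_in Hbad Hst (size (gates C)).
have Hnu : ~~ uniq (out C :: s).
  apply/negP => Hu.
  have : size (out C :: s) <= size (gates C).
    apply: uniq_leq_size Hu _ => x; rewrite inE => /orP[/eqP->//|Hx]; exact: (allP Ha).
  rewrite /= Hs; lia.
have [g Hg] := @nonuniq_cycle C (out C) s Hp Hnu; exact: Hacyc g Hg.
Qed.
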